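(* Consider Dynamic A* (with \texttt{reeval} true or false) using a dyn-monotonic dynamic heuristic. Let $\langle s,\hat g,\hat h\rangle$ be an entry popped from Open at time $t_{\mathrm{pop}}$ (the start $\langle i,0\rangle$ of some iteration $i$). If $s\notin$ Closed at time $t_{\mathrm{pop}}$, then $\hat g+\hat h\le g^{t_{\mathrm{pop}}}(s)+h^{t_{\mathrm{pop}}}(s)$.
   Context: A transition system is $\mathcal T=\langle S,L,c,T,s_I,S_G\rangle$ with finite states $S$, finite labels $L$, cost function $c:L\to\mathbb R_{\ge0}$, transitions $T\subseteq S\times L\times S$, initial state $s_I$, goal states $S_G\subseteq S$. An information source $\sigma$ consists of a set $\mathcal I_\sigma$, $\iota_0^\sigma\in\mathcal I_\sigma$, $\mathrm{update}_\sigma:\mathcal I_\sigma\times T\to\mathcal I_\sigma$, $\mathrm{refine}_\sigma:\mathcal I_\sigma\times S\to\mathcal I_\sigma$. Reachable information: $\iota_n$ is reachable if obtained from $\iota_0^\sigma$ by a sequence of refine steps on states and update steps on transitions $e_1,\dots,e_n$, where each refined state and each origin of an updated transition is $s_I$ or the target of an earlier updated transition. A dynamic heuristic over $\sigma$ is $h:S\times\mathcal I_\sigma\to\mathbb R_{\ge0}\cup\{\infty\}$; it is dyn-monotonic if $h(s,\iota)\le h(s,\mathrm{update}_\sigma(\iota,t))$ and $h(s,\iota)\le h(s,\mathrm{refine}_\sigma(\iota,s'))$ for all reachable $\iota$, all $s,s'\in S$ and all $t\in T$. Parent source $\sigma_p$: $\mathcal I_{\sigma_p}$ = partial functions $S\rightharpoonup\mathbb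 R_{\ge0}\times(T\cup\{\bot\})$; $\iota_0=\{s_I\mapsto\langle0,\bot\rangle\}$; refine is the identity; $\mathrm{update}(\iota,\langle s,\ell,s'\rangle)$ with $\iota(s)=\langle g,\cdot\rangle$ changes only $s'$, setting it to $\langle g+c(\ell),\langle s,\ell,s'\rangle\rangle$ if $\iota(s')$ is undefined or has $g$-component $\ge g+c(\ell)$, otherwise unchanged. Dynamic A* takes $\mathcal T$, sources $\sigma_p,\sigma_h$, a dynamic heuristic $h$ over $\sigma_h$ and a Boolean flag \texttt{reeval}. Notation: at any moment $g(s)$ is the $g$-component of the current $\mathcal I(\sigma_p)(s)$ and $h(s)$ denotes $h(s,\mathcal I(\sigma_h))$ for the current $\mathcal I(\sigma_h)$. Open is a priority queue of entries $\langle s,g,h\rangle$ (duplicates allowed), popped by minimal stored value $g+h$ (ties arbitrary). Algorithm: 1. $\mathcal I(\sigma):=\iota_0^\sigma$ for both sources; $S_{\mathrm{known}}:=\{s_I\}$; Closed $:=\emptyset$; Open empty. If $h(s_I)<\infty$ insert $\langle s_I,g(s_I),h(s_I)\rangle$. 2. While Open is nonempty: pop an entry $\langle s,\hat g,\hat h\rangle$ of minimal $\hat g+\hat h$. If $s\in$ Closed, continue with the next iteration. Otherwise set $\mathcal I(\sigma):=\mathrm{refine}_\sigma(\mathcal I(\sigma),s)$ for both sources. If \texttt{reeval} is true and $\hat h<h(s)$: if $h(s)<\infty$ insert $\langle s,g(s),h(s)\rangle$; continue with the next iteration (this is a re-evaluation). Otherwise add $s$ to Closed ($s$ is expanded). If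 $s\in S_G$, return the path obtained by following the parent pointers of $\mathcal I(\sigma_p)$ from $s$ back to $s_I$. Otherwise, for each $t=\langle s,\ell,s'\rangle\in T$ in some order: let $old:=g(s')$ if $s'\in S_{\mathrm{known}}$ and undefined otherwise; set $\mathcal I(\sigma):=\mathrm{update}_\sigma(\mathcal I(\sigma),t)$ for both sources; add $s'$ to $S_{\mathrm{known}}$; if $h(s')=\infty$ skip $s'$; else if $old$ is undefined insert $\langle s',g(s'),h(s')\rangle$; else if $old>g(s')$, remove $s'$ from Closed if it is there (reopening) and insert $\langle s',g(s'),h(s')\rangle$. 3. Return ''unsolvable''. Times: the iterations of the while loop are numbered $i=1,2,\dots$ (iteration $i$ begins just before its pop); within iteration $i$ a step counter $j$ is $0$ at the start, becomes $1$ after the refine step, and increases by $1$ after each update step on a successor transition. Time $\langle i,j\rangle$ (time $\langle0,0\rangle$ is the initialization) is ordered lexicographically, and $g^{i,j}(s)$, $h^{i,j}(s)$ denote $g(s)$ and $h(s)$ with the information current at that time. *)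

(* Defs.v *)
From HB Require Import structures.
From mathcomp Require Import all_boot all_order all_algebra.
Set Implicit Arguments. Unset Strict Implicit. Unset Printing Implicit Defensive.
Import Order.TTheory GRing.Theory Num.Theory.
Local Open Scope ring_scope.

(* Extended nonnegative values R_{>=0} \cup {oo}: [None] encodes oo. *)
Definition ext_lt (R : realDomainType) (a b : option R) : bool :=
  match a, b with
  | Some x, Some y => x < y
  | Some _, None => true
  | None, _ => false
  end.

Definition ext_le (R : realDomainType) (a b : option R) : bool :=
  match a, b with
  | Some x, Some y => x <= y
  | _, None => true
  | None, Some _ => false
  end.

Record source (S L : finType) := Source {
  info : Type;
  info0 : info;
  upd : info -> (S * L * S) -> info;
  rfn : info -> S -> info
}.

Section DynAStar.
Variables (R : realDomainType) (S L : finType).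
Variable c : L -> R.
Variable T : {set (S * L * S)}.
Variable sI : S.
Variable SG : {set S}.

Definition trans := (S * L * S)%type.

(* Reachable information of a source: each refined state and each origin of
   an updated transition is sI or the target of an earlier updated transition
   (tracked in the list K). *)
Inductive reach_info (sig : source S L) : info sig -> seq S -> Prop :=
| RI0 : reach_info (info0 sig) [:: sI]
| RIref i K s : reach_info i K -> s \in K -> reach_info (rfn i s) K
| RIupd i K (t : trans) : reach_info i K -> t \in T -> t.1.1 \in K ->
    reach_info (upd i t) (t.2 :: K).

Definition dyn_monotonic (sig : source S L) (h : S -> info sig -> option R) :=
  forall i K, reach_info i K ->
    forall s : S,
      (forall t, t \in T -> ext_le (h s i) (h s (upd i t))) /\
      (forall s' : S, ext_le (h s i) (h s (rfn i s'))).

(* The parent source sigma_p: partial functions S -> R * (T + bot). *)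
Definition pinfo := S -> option (R * option trans).

Definition pinfo0 : pinfo := fun x => if x == sI then Some (0, None) else None.

Definition pref (i : pinfo) (s : S) : pinfo := i.

Definition pupd (i : pinfo) (t : trans) : pinfo :=
  let s := t.1.1 in let l := t.1.2 in let s' := t.2 in
  match i s with
  | None => i  (* never used by the algorithm: origins are always defined *)
  | Some (g, _) =>
      let ng := g + c l in
      if match i s' with None => true | Some (g', _) => ng <= g' end
      then fun x => if x == s' then Some (ng, Some t) else i x
      else i
  end.

Definition parent_source : source S L := Source pinfo0 pupd pref.

(* g-component (junk value 0 where undefined; never used there). *)
Definition gval (i : pinfo) (x : S) : R :=
  match i x with Some (g, _) => g | None => 0 end.

Variable sig : source S L.
Variable h : S -> info sig -> option R.
Variable reeval : bool.

Inductive phase :=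
| Loop                       (* at the start of a while-loop iteration *)
| Expand of seq trans        (* expanding; remaining successor transitions *)
| Done.

Record config := Config {
  cip : pinfo;
  cih : info sig;
  cknown : {set S};
  cclosed : {set S};
  copen : seq (S * R * R);   (* multiset of entries <s, g, h> *)
  cphase : phase
}.

Definition key (e : S * R * R) : R := e.1.2 + e.2.

Definition min_entry (op : seq (S * R * R)) (e : S * R * R) : bool :=
  (e \in op) && all (fun e' => key e <= key e') op.

Definition init_config : config :=
  Config pinfo0 (info0 sig) [set sI] set0
    (match h sI (info0 sig) with
     | Some v => [:: (sI, gval pinfo0 sI, v)]
     | None => [::] end)
    Loop.

Definition expand_one (cf : config) (t : trans) (ts : seq trans) : config :=
  let s' := t.2 in
  let old := if s' \in cknown cf then omap fst (cip cf s') else None in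
  let ip' := pupd (cip cf) t in
  let ih' := upd (cih cf) t in
  let kn' := s' |: cknown cf in
  match h s' ih' with
  | None => Config ip' ih' kn' (cclosed cf) (copen cf) (Expand ts)
  | Some v =>
      match old with
      | None => Config ip' ih' kn' (cclosed cf) ((s', gval ip' s', v) :: copen cf)
                       (Expand ts)
      | Some o =>
          if gval ip' s' < o then
            Config ip' ih' kn' (cclosed cf :\ s') ((s', gval ip' s', v) :: copen cf)
                   (Expand ts)
          else Config ip' ih' kn' (cclosed cf) (copen cf) (Expand ts)
      end
  end.

Inductive step : config -> config -> Prop :=
| StPopClosed cf e :
    cphase cf = Loop -> min_entry (copen cf) e -> e.1.1 \in cclosed cf ->
    step cf (Config (cip cf) (cih cf) (cknown cf) (cclosed cf)
                    (rem e (copen cf)) Loop)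
| StReeval cf e :
    cphase cf = Loop -> min_entry (copen cf) e -> e.1.1 \notin cclosed cf ->
    let ip1 := pref (cip cf) e.1.1 in
    let ih1 := rfn (cih cf) e.1.1 in
    reeval -> ext_lt (Some e.2) (h e.1.1 ih1) ->
    step cf (Config ip1 ih1 (cknown cf) (cclosed cf)
                    (match h e.1.1 ih1 with
                     | Some v => (e.1.1, gval ip1 e.1.1, v) :: rem e (copen cf)
                     | None => rem e (copen cf) end) Loop)
| StGoal cf e :
    cphase cf = Loop -> min_entry (copen cf) e -> e.1.1 \notin cclosed cf ->
    let ip1 := pref (cip cf) e.1.1 in
    let ih1 := rfn (cih cf) e.1.1 in
    ~~ (reeval && ext_lt (Some e.2) (h e.1.1 ih1)) ->
    e.1.1 \in SG ->
    step cf (Config ip1 ih1 (cknown cf) (e.1.1 |: cclosed cf)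
                    (rem e (copen cf)) Done)
| StExpand cf e ts :
    cphase cf = Loop -> min_entry (copen cf) e -> e.1.1 \notin cclosed cf ->
    let ip1 := pref (cip cf) e.1.1 in
    let ih1 := rfn (cih cf) e.1.1 in
    ~~ (reeval && ext_lt (Some e.2) (h e.1.1 ih1)) ->
    e.1.1 \notin SG ->
    perm_eq ts [seq t <- enum T | t.1.1 == e.1.1] ->
    step cf (Config ip1 ih1 (cknown cf) (e.1.1 |: cclosed cf)
                    (rem e (copen cf)) (Expand ts))
| StSucc cf t ts :
    cphase cf = Expand (t :: ts) ->
    step cf (expand_one cf t ts)
| StEndExpand cf :
    cphase cf = Expand [::] ->
    step cf (Config (cip cf) (cih cf) (cknown cf) (cclosed cf) (copen cf) Loop).

Inductive reachable : config -> Prop :=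
| Reach0 : reachable init_config
| ReachS cf cf' : reachable cf -> step cf cf' -> reachable cf'.

End DynAStar.

Arguments Loop {S L}.
Arguments Done {S L}.
Arguments Expand {S L} _.

(* Main.v *)
Require Import Defs.
From HB Require Import structures.
From mathcomp Require Import all_boot all_order all_algebra.
Import Order.TTheory GRing.Theory Num.Theory.
Local Open Scope ring_scope.

Lemma ext_le_some (R : realDomainType) (a b : option R) v :
  ext_le a b -> b = Some v -> exists u, a = Some u /\ u <= v.
Proof. by case: a => [u|]; case: b => [w|] //= H [<-]; exists u. Qed.

Lemma mem_rem_neq (T : eqType) (e y : T) s : y \in s -> y != e -> y \in rem e s.
Proof.
elim: s => //= a s IH; rewrite inE => /orP [/eqP <-|ys] ne.
  by rewrite (negbTE ne) mem_head.
by case: ifP => _ //; rewrite inE IH ?orbT.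
Qed.

Section P.
Variables (R : realDomainType) (S L : finType) (c : L -> R)
    (T : {set (S * L * S)}) (sI : S) (SG : {set S})
    (sig : source S L) (h : S -> info sig -> option R) (reeval : bool).
Hypothesis hmono : dyn_monotonic T sI h.

Definition Inv (cf : config R sig) : Prop :=
  [/\ exists K, reach_info T sI (cih cf) K /\ (forall x, x \in cknown cf -> x \in K),
      forall x, x \in cknown cf -> cip cf x <> None,
      forall e, e \in copen cf -> e.1.1 \in cknown cf,
      forall x v, x \in cknown cf -> x \notin cclosed cf -> h x (cih cf) = Some v ->
          exists hh, (x, gval (cip cf) x, hh) \in copen cf /\ hh <= v
    & match cphase cf with
      | Expand ts => forall t, t \in ts -> t \in T /\ t.1.1 \in cknown cf
      | _ => True end].

Lemma Inv_init : Inv (init_config sI h).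
Proof.
split => /=.
- by exists [:: sI]; split; [exact: RI0 | move=> x; rewrite !inE].
- by move=> x; rewrite inE /pinfo0 => ->.
- case: (h sI (info0 sig)) => [v|] // e; rewrite mem_seq1 => /eqP -> /=; by rewrite inE.
- move=> x v; rewrite inE => /eqP -> _ ->; exists v; by rewrite mem_head lexx.
- by [].
Qed.

Lemma pop_h cf e x v : Inv cf -> e \in copen cf ->
  h x (rfn (cih cf) e.1.1) = Some v -> exists u, h x (cih cf) = Some u /\ u <= v.
Proof.
move=> [[K [RK KK]] _ Hop _ _] ein hv.
have [_ H2] := hmono _ _ RK x.
exact: ext_le_some (H2 e.1.1) hv.
Qed.

Lemma pupd_other (i : pinfo R S L) (t : trans S L) x :
  x != t.2 -> pupd c i t x = i x.
Proof.
move=> xne; rewrite /pupd; case: (i t.1.1) => [[g p]|] //.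
by case: ifP => // _; rewrite (negbTE xne).
Qed.

Lemma pupd_s' (i : pinfo R S L) (t : trans S L) g p :
  i t.1.1 = Some (g, p) ->
  exists g' p', pupd c i t t.2 = Some (g', p') /\
    forall g0 p0, i t.2 = Some (g0, p0) -> g' <= g0.
Proof.
move=> E; rewrite /pupd E; case: ifP => C.
  rewrite eqxx; exists (g + c t.1.2), (Some t); split => // g0 p0 E2.
  by move: C; rewrite E2.
move: C; case E2: (i t.2) => [[g1 p1]|] // _.
by exists g1, p1; split => // g0 p0 [<- _].
Qed.

Lemma succ_common cf (t : trans S L) ts (cl : {set S}) (op : seq (S * R * R)) : Inv cf -> cphase cf = Expand (t :: ts) ->
  (forall e, e \in op -> e \in copen cf \/ e.1.1 = t.2) ->
  (forall x v, x \in t.2 |: cknown cf -> x \notin cl ->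
     h x (upd (cih cf) t) = Some v ->
     exists hh, (x, gval (pupd c (cip cf) t) x, hh) \in op /\ hh <= v) ->
  Inv (Config (pupd c (cip cf) t) (upd (cih cf) t) (t.2 |: cknown cf) cl op (Expand ts)).
Proof.
move=> [[K [RK KK]] Hb Hc Hd He] Hph Hop Hd'; rewrite Hph in He.
have [tT tk] := He t (mem_head _ _).
split => //=.
- exists (t.2 :: K); split; first exact: RIupd RK tT (KK _ tk).
  move=> x; rewrite !inE => /orP [->//|/KK ->]; by rewrite orbT.
- move=> x; rewrite inE; case: (eqVneq x t.2) => [->|xne] /= xk.
    case E: (cip cf t.1.1) => [[g p]|]; last by have := Hb _ tk; rewrite E.
    by have [g' [p' [-> _]]] := pupd_s' _ _ _ _ E.
  rewrite pupd_other //; apply: Hb; by move: xk; rewrite ?in_set1 (negbTE xne).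
- move=> e /Hop [/Hc ek|->]; rewrite !inE ?ek ?orbT //; by rewrite ?in_set1 eqxx.
- move=> t' t'in; have [? ?] := He t' (mem_behead (s:=t::ts) t'in); split => //.
  by rewrite !inE; apply/orP; right.
Qed.

Lemma succ_other cf (t : trans S L) ts (cl : {set S}) (op : seq (S * R * R)) x v : Inv cf -> cphase cf = Expand (t :: ts) ->
  {subset copen cf <= op} ->
  (forall y, y != t.2 -> y \notin cl -> y \notin cclosed cf) ->
  x != t.2 -> x \in t.2 |: cknown cf -> x \notin cl ->
  h x (upd (cih cf) t) = Some v ->
  exists hh, (x, gval (pupd c (cip cf) t) x, hh) \in op /\ hh <= v.
Proof.
move=> [[K [RK KK]] Hb Hc Hd He] Hph Hsub Hcl xne; rewrite Hph in He.
have [tT tk] := He t (mem_head _ _).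
rewrite !inE (negbTE xne) /= => xk xcl hx.
have [H1 _] := hmono _ _ RK x.
have [u [hu huv]] := @ext_le_some _ _ _ _ (H1 t tT) hx.
have [hh [hin hle]] := Hd x u xk (Hcl x xne xcl) hu.
exists hh; split; last exact: le_trans hle huv.
by rewrite /gval pupd_other //; apply: Hsub.
Qed.

Lemma Inv_step cf cf' : Inv cf -> step c T SG h reeval cf cf' -> Inv cf'.
Proof.
move=> I st; case: st I.
-
  move=> {}cf e _ /andP [ein _] ecl [HK Hb Hc Hd He]; split => //=.
  + by move=> e' /mem_rem; apply: Hc.
  + move=> x v xk xcl hx; have [hh [hin hle]] := Hd x v xk xcl hx.
    exists hh; split => //; apply: mem_rem_neq => //.
    by apply/eqP => ee; move: ecl; rewrite -ee /= (negbTE xcl).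
-
  move=> {}cf e _ /andP [ein _] ecl ip1 ih1 _ _ I; case: (I) => [[K [RK KK]] Hb Hc Hd He].
  have Hsub : forall e', e' \in (match h e.1.1 ih1 with
                     | Some v => (e.1.1, gval ip1 e.1.1, v) :: rem e (copen cf)
                     | None => rem e (copen cf) end) -> e' \in (e.1.1, gval ip1 e.1.1, 0) :: rem e (copen cf) \/ e'.1.1 = e.1.1.
    move=> e'; case: (h e.1.1 ih1) => [v|]; rewrite ?inE; last by move=> ->; left; rewrite orbT.
    by case/orP => [/eqP -> | ->]; [right | left; rewrite orbT].
  split => //=.
  + exists K; split => //; apply: RIref => //; exact/KK/Hc.
  + move=> e' /Hsub [|->]; last exact: Hc.
    by rewrite inE => /orP [/eqP -> /=|/mem_rem]; [apply: Hc | apply: Hc].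
  + move=> x v xk xcl hx.
    have [u [hu huv]] := pop_h _ _ x _ I ein hx.
    case: (eqVneq x e.1.1) => [xe|xne].
      subst x; rewrite /ih1 hx; exists v; by rewrite mem_head lexx.
    have [hh [hin hle]] := Hd x u xk xcl hu.
    exists hh; split; last exact: le_trans hle huv.
    have : (x, gval (cip cf) x, hh) \in rem e (copen cf).
      by apply: mem_rem_neq => //; apply/eqP => ee; move: xne; rewrite -ee /= eqxx.
    by case: (h e.1.1 ih1) => [w|] // H; rewrite inE H orbT.
-
  move=> {}cf e _ /andP [ein _] ecl ip1 ih1 _ _ I; case: (I) => [[K [RK KK]] Hb Hc Hd He].
  split => //=.
  + exists K; split => //; apply: RIref => //; exact/KK/Hc.
  + by move=> e' /mem_rem; apply: Hc.
  + move=> x v xk; rewrite inE negb_or => /andP [xne xcl] hx.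
    have [u [hu huv]] := pop_h _ _ x _ I ein hx.
    have [hh [hin hle]] := Hd x u xk xcl hu.
    exists hh; split; last exact: le_trans hle huv.
    by apply: mem_rem_neq => //; apply/eqP => ee; move: xne; rewrite -ee /= in_set1 eqxx.
-
  move=> {}cf e ts _ /andP [ein _] ecl ip1 ih1 _ _ pts I; case: (I) => [[K [RK KK]] Hb Hc Hd He].
  split => //=.
  + exists K; split => //; apply: RIref => //; exact/KK/Hc.
  + by move=> e' /mem_rem; apply: Hc.
  + move=> x v xk; rewrite inE negb_or => /andP [xne xcl] hx.
    have [u [hu huv]] := pop_h _ _ x _ I ein hx.
    have [hh [hin hle]] := Hd x u xk xcl hu.
    exists hh; split; last exact: le_trans hle huv.
    by apply: mem_rem_neq => //; apply/eqP => ee; move: xne; rewrite -ee /= in_set1 eqxx.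
  + move=> t; rewrite (perm_mem pts) mem_filter mem_enum => /andP [/eqP te tT].
    by split => //; rewrite te; apply: Hc.
-
  move=> {}cf t ts Hph I; case: (I) => [[K [RK KK]] Hb Hc Hd He].
  have He' := He; rewrite Hph in He'; have [tT tk] := He' t (mem_head _ _).
  have [H1 _] := hmono _ _ RK t.2.
  rewrite /expand_one.
  case hE: (h t.2 (upd (cih cf) t)) => [v|].
  + case: ifP => s'k.
    * case E0: (cip cf t.2) => [[g0 p0]|]; last by have := Hb _ s'k; rewrite E0.
      rewrite /=; case: ifP => lt.
      - apply: succ_common => //.
          by move=> e; rewrite inE => /orP [/eqP ->|]; [right|left].
        move=> x w xk xcl hx; case: (eqVneq x t.2) => [xe|xne].
          subst x; move: hx; rewrite hE => -[<-]; exists v; by rewrite mem_head lexx.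
        apply: (@succ_other _ _ _ _ _ x w I Hph _ _ xne xk xcl hx).
          by move=> y yin; rewrite inE yin orbT.
        by move=> y yne; rewrite !inE yne.
      - apply: succ_common => //; first by move=> e ->; left.
        move=> x w xk xcl hx; case: (eqVneq x t.2) => [xe|xne]; last first.
          by apply: (@succ_other _ _ _ _ _ x w I Hph _ _ xne xk xcl hx).
        subst x; move: hx; rewrite hE => -[<-].
        have [u [hu huv]] := @ext_le_some _ _ _ _ (H1 t tT) hE.
        have [hh [hin hle]] := Hd t.2 u s'k xcl hu.
        exists hh; split; last exact: le_trans hle huv.
        case E1: (cip cf t.1.1) => [[g p]|]; last by have := Hb _ tk; rewrite E1.
        have [g' [p' [E2 Hle]]] := pupd_s' _ _ _ _ E1.
        have := Hle _ _ E0; move: lt; rewrite /gval E2 => /negbT; rewrite -leNgt => a b.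
        have -> : g' = g0 by apply/eqP; rewrite eq_le a b.
        by move: hin; rewrite /gval E0.
    * apply: succ_common => //.
        by move=> e; rewrite inE => /orP [/eqP ->|]; [right|left].
      move=> x w xk xcl hx; case: (eqVneq x t.2) => [xe|xne].
        subst x; move: hx; rewrite hE => -[<-]; exists v; by rewrite mem_head lexx.
      apply: (@succ_other _ _ _ _ _ x w I Hph _ _ xne xk xcl hx).
      by move=> y yin; rewrite inE yin orbT.
      by move=> y _.
  + apply: succ_common => //; first by move=> e ->; left.
    move=> x w xk xcl hx; case: (eqVneq x t.2) => [xe|xne].
      by subst x; rewrite hE in hx.
    by apply: (@succ_other _ _ _ _ _ x w I Hph _ _ xne xk xcl hx).
-
  move=> {}cf _ [HK Hb Hc Hd He]; by split.
Qed.

End P.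

Theorem lemma4 (R : realDomainType) (S L : finType) (c : L -> R)
    (T : {set (S * L * S)}) (sI : S) (SG : {set S})
    (sig : source S L) (h : S -> info sig -> option R) (reeval : bool)
    (c_ge0 : forall l, 0 <= c l)
    (h_ge0 : forall s i v, h s i = Some v -> 0 <= v)
    (hmono : dyn_monotonic T sI h)
    (cf : config R sig)
    (hreach : reachable c T sI SG h reeval cf)
    (s : S) (ghat hhat : R) :
  cphase cf = Loop ->
  min_entry (copen cf) (s, ghat, hhat) ->
  s \notin cclosed cf ->
  exists (g : R) (p : option (S * L * S)),
    cip cf s = Some (g, p) /\
    ext_le (Some (ghat + hhat))
      (match h s (cih cf) with Some v => Some (g + v) | None => None end).
Proof.
have I : @Inv R S L T sI sig h cf.
  elim: hreach => [|cf1 cf2 _ IH st]; first exact: Inv_init.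
  exact: (@Inv_step _ _ _ _ _ _ _ _ _ _ hmono _ _ IH st).
case: I => _ Hb Hc Hd _ _ /andP [sin sall] scl.
have sk : s \in cknown cf by exact: (Hc _ sin).
case E: (cip cf s) => [[g p]|]; last by have := Hb s sk; rewrite E.
exists g, p; split => //.
case hE: (h s (cih cf)) => [v|] //=.
have [hh [hin hle]] := Hd s v sk scl hE.
move/allP: sall => /(_ _ hin); rewrite /key /= /gval E => H.
apply: le_trans H _; by rewrite lerD2l.
Qed.
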